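(* Let $P$ be an $n\times n$ non-negative matrix that is diagonally dominant, i.e. $P(i,i)\ge\sum_{j\ne i}P(i,j)$ for $1\le i\le n$. Then $$\max_{Q\in\Omega_n}CW(P,Q)=\max_{Q\in RS_n}CW(P,Q)=\sum_{1\le i\le n}\log(P(i,i)).$$
   Context: $\Omega_n$ is the set of $n\times n$ doubly-stochastic matrices and $RS_n$ the set of $n\times n$ row-stochastic matrices (non-negative entries, each row sums to $1$). For non-negative $n\times n$ matrices $P,Q$, $$CW(P,Q)=\sum_{i,j}(1-Q(i,j))\log(1-Q(i,j)) - \sum_{i,j}Q(i,j)\log\!\left(\frac{Q(i,j)}{P(i,j)}\right),$$ with the conventions $0^0=1$ (a term with $Q(i,j)=0$ contributes $0$), a term with $Q(i,j)>0=P(i,j)$ equals $-\infty$, and $\log 0=-\infty$. *)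

(* Defs.v *)
From HB Require Import structures.
From mathcomp Require Import all_boot all_order all_algebra.
From mathcomp Require Import all_classical all_reals all_analysis.
Set Implicit Arguments. Unset Strict Implicit. Unset Printing Implicit Defensive.
Import Order.TTheory GRing.Theory Num.Theory.
Local Open Scope ring_scope.
Local Open Scope ereal_scope.

Definition elog (R : realType) (x : R) : \bar R :=
  if x == 0%R then -oo else (ln x)%:E.

Definition row_stochastic (R : realType) (n : nat) (Q : 'M[R]_n) : Prop :=
  (forall i j, (0 <= Q i j)%R) /\ (forall i, (\sum_j Q i j = 1)%R).

Definition doubly_stochastic (R : realType) (n : nat) (Q : 'M[R]_n) : Prop :=
  row_stochastic Q /\ (forall j, (\sum_i Q i j = 1)%R).

(* (1-q) log (1-q), with 0 log 0 = 0 (convention 0^0 = 1) *)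
Definition CW_term1 (R : realType) (q : R) : \bar R :=
  if (1 - q == 0)%R then 0 else ((1 - q) * ln (1 - q))%R%:E.

Definition CW_term2 (R : realType) (p q : R) : \bar R :=
  if q == 0%R then 0
  else if p == 0%R then -oo
  else (- (q * ln (q / p)))%R%:E.

Definition CW (R : realType) (n : nat) (P Q : 'M[R]_n) : \bar R :=
  \sum_i \sum_j (CW_term1 (Q i j) + CW_term2 (P i j) (Q i j)).

Definition is_max_on (T : Type) (R : realType) (A : T -> Prop) (f : T -> \bar R)
  (m : \bar R) : Prop :=
  (exists x, A x /\ f x = m) /\ (forall x, A x -> f x <= m).

(* Main.v *)
Require Import Defs.
From HB Require Import structures.
From mathcomp Require Import all_boot all_order all_algebra.
From mathcomp Require Import all_classical all_reals all_analysis.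
From mathcomp Require Import ring lra.
Set Implicit Arguments. Unset Strict Implicit.
Import Order.TTheory GRing.Theory Num.Theory.
Local Open Scope ring_scope.

Lemma ln_le_sub1 (R : realType) (x : R) : 0 < x -> ln x <= x - 1.
Proof.
move=> x0; have h := @le_ln1Dx R (x - 1).
have e : 1 + (x - 1) = x by lra.
rewrite e in h; apply: h; lra.
Qed.

Lemma lnMp (R : realType) (x y : R) : 0 < x -> 0 < y -> ln (x * y) = ln x + ln y.
Proof. by move=> x0 y0; rewrite lnM // posrE. Qed.

Lemma lnVp (R : realType) (x : R) : 0 < x -> ln (x^-1) = - ln x.
Proof. by move=> x0; rewrite lnV // posrE. Qed.

Lemma chord (R : realType) (u w : R) : 0 < w -> w <= u -> u <= 1 ->
  (1 - w) * (u * ln u) <= (1 - u) * (w * ln w).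
Proof.
move=> w0 wu u1.
have u0 : 0 < u by lra.
have H1 := ln_le_sub1 u0.
have H2 : w * (ln u - ln w) <= u - w.
  have := ln_le_sub1 (divr_gt0 u0 w0).
  rewrite lnMp ?invr_gt0 // lnVp // => h.
  have := ler_wpM2l (ltW w0) h.
  have -> : w * (u / w - 1) = u - w by field; rewrite gt_eqF.
  by [].
have A : 0 <= (u - w) * (u - 1 - ln u) by apply: mulr_ge0; lra.
have B : 0 <= (1 - u) * (u - w - w * (ln u - ln w)) by apply: mulr_ge0; lra.
nra.
Qed.

Lemma gibbs1 (R : realType) (a b c s : R) : 0 < a -> 0 < b -> 0 < c -> 0 < s ->
  - (a * ln (a / b)) <= a * ln (c / s) + b * s / c - a.
Proof.
move=> a0 b0 c0 s0.
have x0 : 0 < b * s / (c * a) by rewrite divr_gt0 ?mulr_gt0.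
have h := ln_le_sub1 x0.
rewrite !lnMp ?invr_gt0 ?mulr_gt0 // !lnVp ?mulr_gt0 // lnMp // in h.
rewrite !lnMp ?invr_gt0 // !lnVp //.
have := ler_wpM2l (ltW a0) h.
have -> : a * (b * s / (c * a) - 1) = b * s / c - a.
  by field; rewrite ?gt_eqF.
lra.
Qed.

Lemma row_ineq (R : realType) n (p q : 'I_n -> R) (i : 'I_n) :
 (forall j, 0 <= p j) -> (forall j, 0 <= q j) -> \sum_j q j = 1 ->
 (forall j, q j != 0 -> p j != 0) -> \sum_(j | j != i) p j <= p i -> 0 < p i ->
 \sum_j ((1 - q j) * ln (1 - q j) - q j * ln (q j / p j)) <= ln (p i).
Proof.
move=> p0 q0 hq hpq hdom pi0.
set s := 1 - q i.
have hs : s = \sum_(j | j != i) q j.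
  rewrite /s -hq (bigD1 i) //=; lra.
have s0 : 0 <= s by rewrite hs sumr_ge0.
have qjs : forall j, j != i -> q j <= s.
  by move=> j ji; rewrite hs (bigD1 j) //= lerDl sumr_ge0.
have hqi := q0 i.
have es : s = 1 - q i by [].

have s1 : s <= 1 by rewrite /s; lra.
set K := q i * ln (q i) / s.
set L := ln (p i / s).
have eK : s * K = q i * ln (q i).
  have [s00|sn0] := eqVneq s 0.
    have -> : q i = 1 by move: s00; rewrite /s; lra.
    by rewrite s00 ln1 !mulr0 mul0r.
  by rewrite /K; field.
have eL : s * L = s * ln (p i) - s * ln s.
  have [->|sn0] := eqVneq s 0; first by rewrite !mul0r subrr.
  have sp : 0 < s by rewrite lt_neqAle eq_sym sn0.
  by rewrite /L lnMp ?invr_gt0 // lnVp // mulrDr mulrN.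
have B1 : forall j, j != i -> (1 - q j) * ln (1 - q j) <= q j * K.
  move=> j ji; have qjs' := qjs j ji; have qj0 := q0 j.
  have [s00|sn0] := eqVneq s 0.
    have -> : q j = 0 by lra.
    by rewrite subr0 ln1 !mulr0 mul0r.
  have sp : 0 < s by rewrite lt_neqAle eq_sym sn0.
  rewrite /K mulrA ler_pdivlMr //.
  have [qi0|qin0] := eqVneq (q i) 0.
    rewrite qi0 mul0r mulr0.
    apply: mulr_le0_ge0; last exact: ltW.
    apply: mulr_ge0_le0; first lra.
    apply: ln_le0; lra.
  have qip : 0 < q i by rewrite lt_neqAle eq_sym qin0.
  have := @chord R (1 - q j) (q i) qip ltac:(lra) ltac:(lra).
  rewrite -/s (_ : 1 - (1 - q j) = q j); last by lra.
  nra.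
have B2 : forall j, j != i -> - (q j * ln (q j / p j)) <= q j * L + p j * s / p i - q j.
  move=> j ji; have qjs' := qjs j ji; have qj0 := q0 j.
  have [qj00|qjn0] := eqVneq (q j) 0.
    rewrite qj00 !mul0r !oppr0 add0r addr0.
    by rewrite divr_ge0 ?mulr_ge0 // ltW.
  have qjp : 0 < q j by rewrite lt_neqAle eq_sym qjn0.
  have pjp : 0 < p j by rewrite lt_neqAle eq_sym (hpq _ qjn0) p0.
  by apply: gibbs1 => //; lra.
rewrite (bigD1 i) //=.
have S : \sum_(j | j != i) ((1 - q j) * ln (1 - q j) - q j * ln (q j / p j)) <=
         \sum_(j | j != i) (q j * K + (q j * L + p j * s / p i - q j)).
  apply: ler_sum => j ji; have := B1 j ji; have := B2 j ji; lra.
have E : \sum_(j | j != i) (q j * K + (q j * L + p j * s / p i - q j)) =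
         s * K + s * L + (\sum_(j | j != i) p j) * s / p i - s.
  rewrite !big_split /= sumrN -!mulr_suml -hs; ring.
have F : (\sum_(j | j != i) p j) * s / p i <= s.
  rewrite ler_pdivrMr //; nra.
have Ti : q i * ln (q i / p i) = q i * ln (q i) - q i * ln (p i).
  have [->|qin0] := eqVneq (q i) 0; first by rewrite !mul0r subrr.
  have qip : 0 < q i by rewrite lt_neqAle eq_sym qin0.
  by rewrite lnMp ?invr_gt0 // lnVp // mulrDr mulrN.
have G : s * ln (p i) + q i * ln (p i) = ln (p i) by rewrite -mulrDl /s subrK mul1r.
rewrite -/s Ti.
lra.
Qed.

Lemma row_bound (R : realType) (n : nat) (P Q : 'M[R]_n)
  (P_nonneg : forall i j, 0 <= P i j)
  (P_diagdom : forall i, \sum_(j | j != i) P i j <= P i i) :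
  row_stochastic Q -> (CW P Q <= \sum_i elog (P i i))%E.
Proof.
move=> [Q0 Q1]; rewrite /CW; apply: lee_sum => i _.
have [[j /andP [qj pj]]|good] := pselect (exists j, (Q i j != 0) && (P i j == 0)).
  by rewrite (bigD1 j) //= /CW_term2 (negbTE qj) pj addeNy addNye leNye.
have hpq : forall j, Q i j != 0 -> P i j != 0.
  move=> j qj; apply/negP => pj; apply: good; exists j; by rewrite qj pj.
have -> : (\sum_j (CW_term1 (Q i j) + CW_term2 (P i j) (Q i j)) =
   (\sum_j ((1 - Q i j) * ln (1 - Q i j) - Q i j * ln (Q i j / P i j)))%:E)%E.
  rewrite -sumEFin; apply: eq_bigr => j _.
  have t1 : CW_term1 (Q i j) = ((1 - Q i j) * ln (1 - Q i j))%:E.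
    by rewrite /CW_term1; case: eqP => [->|]; rewrite ?mul0r.
  have t2 : CW_term2 (P i j) (Q i j) = (- (Q i j * ln (Q i j / P i j)))%:E.
    rewrite /CW_term2; case: eqP => [->|/eqP qn]; first by rewrite mul0r oppr0.
    by rewrite (negbTE (hpq _ qn)).
  by rewrite t1 t2 -EFinD.
have [j qj] : exists j, Q i j != 0.
  case: (pselect (exists j, Q i j != 0)) => // nz.
  have : \sum_j Q i j = 0.
    apply: big1 => j _; apply/eqP/negPn/negP => h; apply: nz; by exists j.
  by rewrite Q1 => /eqP; rewrite oner_eq0.
have pjp : 0 < P i j by rewrite lt_neqAle eq_sym (hpq _ qj) P_nonneg.
have pip : 0 < P i i.
  have [eji|ji] := eqVneq j i; first by move: pjp; rewrite eji.
  apply: (lt_le_trans pjp).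
  apply: (le_trans _ (P_diagdom i)).
  rewrite (bigD1 j) //= lerDl sumr_ge0 // => k _; exact: P_nonneg.
rewrite /elog gt_eqF // lee_fin.
by apply: row_ineq => //; exact: P_diagdom.
Qed.

Lemma attain (R : realType) (n : nat) (P : 'M[R]_n)
  (P_nonneg : forall i j, 0 <= P i j) :
  CW P 1%:M = (\sum_i elog (P i i))%E.
Proof.
rewrite /CW; apply: eq_bigr => i _.
rewrite (bigD1 i) //= big1 ?adde0.
  rewrite mxE eqxx mulr1n /CW_term1 /CW_term2 subrr eqxx oner_eq0 add0e /elog.
  case: eqP => // /eqP pn0.
  by rewrite mul1r div1r lnV ?opprK // posrE lt_neqAle eq_sym pn0 P_nonneg.
move=> j ji; rewrite mxE eq_sym (negbTE ji) mulr0n /CW_term1 /CW_term2 eqxx subr0.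
by rewrite oner_eq0 ln1 mulr0 adde0.
Qed.

Lemma ds1 (R : realType) (n : nat) : doubly_stochastic (1%:M : 'M[R]_n).
Proof.
have e : forall i : 'I_n, \sum_j (1%:M : 'M[R]_n) i j = 1.
  move=> i; rewrite (bigD1 i) //= big1 ?addr0; first by rewrite mxE eqxx.
  by move=> j ji; rewrite mxE eq_sym (negbTE ji).
split; first split.
- by move=> i j; rewrite mxE ler0n.
- exact: e.
- move=> j; rewrite (bigD1 j) //= big1 ?addr0; first by rewrite mxE eqxx.
  by move=> i ij; rewrite mxE (negbTE ij).
Qed.

Unset Implicit Arguments. Set Strict Implicit.

Theorem corollary5p10 (R : realType) (n : nat) (P : 'M[R]_n)
  (P_nonneg : forall i j, 0 <= P i j)
  (P_diagdom : forall i, \sum_(j | j != i) P i j <= P i i) :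
  is_max_on (@doubly_stochastic R n) (CW P) (\sum_i elog (P i i))%E /\
  is_max_on (@row_stochastic R n) (CW P) (\sum_i elog (P i i))%E.
Proof.
split; split.
- by exists 1%:M; split; [exact: ds1 | exact: attain].
- by move=> Q [rs _]; exact: row_bound.
- by exists 1%:M; split; [exact: (ds1 R n).1 | exact: attain].
- by move=> Q rs; exact: row_bound.
Qed.
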